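(* Let $m\ge1$, $n=2m$, and let $\mathcal{S}_m\subset\mathcal{S}_n\subset\mathcal{T}$ be nested subsets of the training set of sizes $m$ and $n$, with regularized empirical risks $R_m,R_n$ and minimizers $\mathbf{w}_m^*,\mathbf{w}_n^*$. Let $\mathbf{w}_m$ satisfy $\mathbb{E}[R_m(\mathbf{w}_m)-R_m(\mathbf{w}_m^* )]\le V_m$. Let an iterative descent method (deterministic or stochastic) be applied to $R_n$ which is linearly convergent with factor $0\le\rho_n<1$, i.e., for any initial point $\mathbf{u}_0$, its iterate $\mathbf{u}_s$ after $s$ iterations satisfies $\mathbb{E}[R_n(\mathbf{u}_s)-R_n(\mathbf{w}_n^* )]\le\rho_n^{s}\,(R_n(\mathbf{u}_0)-R_n(\mathbf{w}_n^* ))$ (expectation over the method's internal randomness). Let $\mathbf{w}_n$ be the output of $s_n$ iterations of this method started at $\mathbf{w}_m$. If $$s_n\ \ge\ -\frac{\log\left[3\cdot 2^\alpha+(2^\alpha-1)\left(2+\frac{c}{2}\|\mathbf{w}^*\|^2\right)\right]}{\log\rho_n},$$ then $\mathbb{E}[R_n(\mathbf{w}_n)-R_n(\mathbf{w}_n^* )]\le V_n$.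
   Context: Let $Z$ be a random variable with distribution $P$ on a space $\mathcal{Z}$ and $f:\mathbb{R}^p\times\mathcal{Z}\to\mathbb{R}$ a loss function. The expected loss is $L(\mathbf{w})=\mathbb{E}_Z[f(\mathbf{w},Z)]$ and $\mathbf{w}^*$ denotes a minimizer of $L$. The training set $\mathcal{T}=\{z_1,\dots,z_N\}$ consists of $N$ independent samples from $P$. For a (fixed, data-independent) subset $\mathcal{S}\subseteq\mathcal{T}$ with $k$ elements, the empirical loss is $L_{\mathcal{S}}(\mathbf{w})=\frac1k\sum_{z\in\mathcal{S}}f(\mathbf{w},z)$; for the sets $\mathcal{S}_k$ we write $L_k=L_{\mathcal{S}_k}$. Statistical accuracy: $V_k=\gamma/k^\alpha$ with constants $\gamma>0$ and $\alpha\in[0.5,1]$, and it is assumed that for every $k$ and every set $\mathcal{S}$ of $k$ independent samples from $P$, $\mathbb{E}[\sup_{\mathbf{w}\in\mathbb{R}^p}|L(\mathbf{w})-L_{\mathcal{S}}(\mathbf{w})|]\le V_k$ (expectation over the samples). For a constant $c>0$ the regularized empirical risk is $R_k(\mathbf{w})=L_k(\mathbf{w})+\frac{cV_k}{2}\|\mathbf{w}\|^2$, with minimizer $\mathbf{w}_k^*$. Assumption: for every $z$, $f(\cdot,z)$ is convex with $M$-Lipschitz continuous gradient. In the conclusion the expectation is over the training samples and the randomness of the method. *)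

(* Defs.v *)
From HB Require Import structures.
From mathcomp Require Import all_ssreflect_compat ssralg ssrnum ssrint poly matrix.
From mathcomp Require Import interval archimedean finmap interval_inference.
From mathcomp Require Import boolp classical_sets functions cardinality fsbigop.
From mathcomp Require Import reals ereal topology normedtype sequences measure.
From mathcomp Require Import exp numfun realfun measurable_realfun derive.
From mathcomp Require Import lebesgue_measure lebesgue_integral probability.
Import Order.TTheory GRing.Theory Num.Def Num.Theory.
Import numFieldNormedType.Exports.
Set Implicit Arguments. Unset Strict Implicit. Unset Printing Implicit Defensive.
Local Open Scope classical_set_scope.
Local Open Scope ring_scope.

Section Defs.
Context {R : realType} {p : nat}.

Definition sqnorm (w : 'rV[R]_p) : R := \sum_(i < p) (w ord0 i) ^+ 2.
Definition enorm (w : 'rV[R]_p) : R := Num.sqrt (sqnorm w).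

Definition convex_fun (g : 'rV[R]_p -> R) : Prop :=
  forall (x y : 'rV[R]_p) (t : R), 0 <= t <= 1 ->
    g ((1 - t) *: x + t *: y) <= (1 - t) * g x + t * g y.

Definition grad (g : 'rV[R]_p -> R) (x : 'rV[R]_p) : 'rV[R]_p :=
  \row_(i < p) ('d g x (delta_mx ord0 i : 'rV[R]_p)).

Definition lipschitz_grad (M : R) (g : 'rV[R]_p -> R) : Prop :=
  (forall x, differentiable g x) /\
  (forall x y, enorm (grad g x - grad g y) <= M * enorm (x - y)).

Definition stat_acc (gamma alpha : R) (k : nat) : R :=
  gamma / ((k%:R : R) `^ alpha).

Context {dZ : measure_display} {Z : measurableType dZ}.

Definition exp_loss (PZ : probability Z R) (f : 'rV[R]_p -> Z -> R)
  (w : 'rV[R]_p) : R := fine (\int[PZ]_x (f w x)%:E).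

Context {N : nat}.

Definition emp_loss (f : 'rV[R]_p -> Z -> R) (S : {set 'I_N})
  (D : 'I_N -> Z) (w : 'rV[R]_p) : R :=
  (#|S|%:R)^-1 * \sum_(i in S) f w (D i).

Definition reg_risk (gamma alpha c : R) (f : 'rV[R]_p -> Z -> R)
  (S : {set 'I_N}) (D : 'I_N -> Z) (w : 'rV[R]_p) : R :=
  emp_loss f S D w + c * stat_acc gamma alpha #|S| / 2 * sqnorm w.

Definition sup_dev (PZ : probability Z R) (f : 'rV[R]_p -> Z -> R)
  (S : {set 'I_N}) (D : 'I_N -> Z) : \bar R :=
  ereal_sup [set (`|exp_loss PZ f w - emp_loss f S D w|)%:E | w in [set: 'rV[R]_p]].

End Defs.

Definition sample {T Z : Type} {N : nat} (z : 'I_N -> T -> Z) (o : T) : 'I_N -> Z :=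
  fun i => z i o.

(* Main.v *)
Require Import Defs.
From HB Require Import structures.
From mathcomp Require Import all_ssreflect_compat ssralg ssrnum ssrint poly matrix.
From mathcomp Require Import interval archimedean finmap interval_inference.
From mathcomp Require Import boolp classical_sets functions cardinality fsbigop.
From mathcomp Require Import reals ereal topology normedtype sequences measure.
From mathcomp Require Import exp numfun realfun measurable_realfun derive.
From mathcomp Require Import lebesgue_measure lebesgue_integral probability.
Import Order.TTheory GRing.Theory Num.Def Num.Theory.
Import numFieldNormedType.Exports.
Local Open Scope classical_set_scope.
Local Open Scope ring_scope.
From mathcomp Require Import ring lra.

Lemma le_int_nm d (T : measurableType d) (R : realType)
  (mu : {measure set T -> \bar R}) (f g : T -> \bar R) :
  (forall x, (0 <= f x)%E) -> (forall x, (f x <= g x)%E) ->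
  (\int[mu]_x f x <= \int[mu]_x g x)%E.
Proof.
move=> f0 fg; have g0 x : (0 <= g x)%E by exact: le_trans (f0 x) (fg x).
rewrite !ge0_integralTE//; apply: ge_ereal_sup => _ [h /= hf <-].
apply: ereal_sup_ubound; exists h => //= x; exact: le_trans (hf x) (fg x).
Qed.

Lemma key_alg (R : realType) (Lmx LTx Lx Lmy LTy Ly Lnw Lw Lmz cn t sx sy sz sw A B C : R) :
  0 <= t -> 0 <= cn -> 0 <= sx ->
  `|Lx - Lmx| <= A -> `|Lx - LTx| <= B -> `|Ly - Lmy| <= A -> `|Ly - LTy| <= B ->
  `|Lw - Lnw| <= C -> `|Ly - (Lmy + LTy) / 2| <= C ->
  Lmz + (1 + t) * cn * sz <= Lmy + (1 + t) * cn * sy ->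
  (Lmy + LTy) / 2 + cn * sy <= Lnw + cn * sw ->
  Lw <= Ly ->
  ((Lmx + LTx) / 2 + cn * sx) - ((Lmy + LTy) / 2 + cn * sy) <=
  ((Lmx + (1 + t) * cn * sx) - (Lmz + (1 + t) * cn * sz)) + (A + B) + t * (2 * C + cn * sw).
Proof.
move=> t0 cn0 sx0 /ler_normlP[h1 h1'] /ler_normlP[h2 h2'] /ler_normlP[h3 h3']
  /ler_normlP[h4 h4'] /ler_normlP[h5 h5'] /ler_normlP[h6 h6'] h7 h8 h9.
have P1 : t * (cn * sy) <= t * (2 * C + cn * sw).
  apply: ler_wpM2l => //. lra.
have P2 : 0 <= t * (cn * sx) by rewrite !mulr_ge0.
rewrite !mulrDl !mul1r; lra.
Qed.

Lemma rho_bound (R : realType) (rho K : R) (s : nat) :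
  0 <= rho < 1 -> (0 < s)%N -> 1 <= K -> - ln K / ln rho <= s%:R ->
  rho ^+ s * K <= 1.
Proof.
move=> /andP[r0 r1] s0 K1 hs.
have K0 : 0 < K by lra.
have [->|rpos] := eqVneq rho 0; first by rewrite expr0n gtn_eqF // mul0r.
have rp : 0 < rho by rewrite lt_neqAle eq_sym rpos.
have lr : ln rho < 0 by apply: ln_lt0; rewrite rp.
have H : s%:R * ln rho <= - ln K.
  have := ler_wnM2r (ltW lr) hs; rewrite divfK ?lt_eqF //.
have -> : rho ^+ s = expR (s%:R * ln rho).
  by rewrite -powR_mulrn ?ltW // /powR gt_eqF.
rewrite -ler_pdivlMr // div1r -(lnK (K0 : K \in Num.pos)) -expRN.
by rewrite ler_expR.
Qed.

Lemma intD_le d (T : measurableType d) (R : realType)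
  (mu : {measure set T -> \bar R}) (f g : T -> \bar R) (a b : \bar R) :
  (forall x, (0 <= f x)%E) -> measurable_fun setT f ->
  (forall x, (0 <= g x)%E) -> measurable_fun setT g ->
  (\int[mu]_x f x <= a)%E -> (\int[mu]_x g x <= b)%E ->
  (\int[mu]_x (f x + g x) <= a + b)%E.
Proof.
move=> f0 mf g0 mg fa gb; rewrite ge0_integralD //; exact: leeD.
Qed.

Lemma sqnorm_ge0 (R : realType) (p : nat) (w : 'rV[R]_p) : 0 <= sqnorm w.
Proof. by rewrite /sqnorm; apply: sumr_ge0 => i _; exact: sqr_ge0. Qed.

Lemma lift_bound (R : realType) (e a b c' t k : R) (sa sb sc : \bar R) :
  0 <= t -> (a%:E <= sa)%E -> (b%:E <= sb)%E -> (c'%:E <= sc)%E ->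
  ((e + (a + b) + (2 * t) * c' + t * k)%:E <=
   e%:E + (sa + sb) + (2 * t)%:E * sc + (t * k)%:E)%E.
Proof.
move=> t0 ha hb hc; rewrite !EFinD EFinM.
apply: leeD => //; apply: leeD; first (apply: leeD => //; exact: leeD).
by apply: lee_wpmul2l => //; rewrite lee_fin mulr_ge0.
Qed.

Lemma emp_split (R : realType) (p : nat) (dZ : measure_display) (Z : measurableType dZ)
  (N : nat) (f : 'rV[R]_p -> Z -> R) (Sm Sn : {set 'I_N}) (D : 'I_N -> Z) (m : nat) w :
  (1 <= m)%N -> #|Sm| = m -> #|Sn| = (2 * m)%N -> Sm \subset Sn ->
  #|Sn :\: Sm| = m /\
  emp_loss f Sn D w = (emp_loss f Sm D w + emp_loss f (Sn :\: Sm) D w) / 2.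
Proof.
move=> m1 hSm hSn sub.
have hT : #|Sn :\: Sm| = m by rewrite cardsDS // hSn hSm mul2n -addnn addnK.
split => //.
rewrite /emp_loss hT hSm hSn (big_setID Sm) /= (finset.setIidPr sub) natrM.
have m0 : (m%:R : R) != 0 by rewrite pnatr_eq0 -lt0n.
move: (\sum_(i in Sm) _) (\sum_(i in Sn :\: Sm) _) => a b.
move: m0; set M := (m%:R : R) => m0.
have -> : ((2%N)%:R : R) = 2 by [].
by field.
Qed.

Theorem theorem2 (R : realType) (p : nat)
  (dZ : measure_display) (Z : measurableType dZ) (PZ : probability Z R)
  (f : 'rV[R]_p -> Z -> R) (M gamma alpha c : R)
  (dO : measure_display) (Omega : measurableType dO) (P : probability Omega R)
  (N : nat) (z : 'I_N -> Omega -> Z)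
  (m n : nat) (Sm Sn : {set 'I_N}) (wstar : 'rV[R]_p)
  (wmstar wnstar wm : Omega -> 'rV[R]_p)
  (dX : measure_display) (Xi : measurableType dX) (Q : probability Xi R)
  (meth : Omega -> 'rV[R]_p -> nat -> Xi -> 'rV[R]_p)
  (rho : R) (s_n : nat) :
  (* loss assumptions *)
  (forall x : Z, convex_fun (fun w => f w x)) ->
  (forall x : Z, lipschitz_grad M (fun w => f w x)) ->
  (forall w, PZ.-integrable [set: Z] (fun x => (f w x)%:E)) ->
  (* statistical accuracy *)
  0 < gamma -> 1 / 2 <= alpha <= 1 -> 0 < c ->
  (forall S : {set 'I_N}, (0 < #|S|)%N ->
     measurable_fun [set: Omega] ((fun o => sup_dev PZ f S (sample z o)) : Omega -> \bar R) /\
     (\int[P]_o sup_dev PZ f S (sample z o) <= (stat_acc gamma alpha #|S|)%:E)%E) ->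
  (* w* minimizes the expected loss *)
  (forall w, exp_loss PZ f wstar <= exp_loss PZ f w) ->
  (* nested subsets *)
  (1 <= m)%N -> n = (2 * m)%N -> #|Sm| = m -> #|Sn| = n -> Sm \subset Sn ->
  (* minimizers of the regularized risks *)
  (forall o w, reg_risk gamma alpha c f Sm (sample z o) (wmstar o)
               <= reg_risk gamma alpha c f Sm (sample z o) w) ->
  (forall o w, reg_risk gamma alpha c f Sn (sample z o) (wnstar o)
               <= reg_risk gamma alpha c f Sn (sample z o) w) ->
  (* w_m solves R_m to within V_m in expectation *)
  measurable_fun [set: Omega] (fun o =>
     (reg_risk gamma alpha c f Sm (sample z o) (wm o)
      - reg_risk gamma alpha c f Sm (sample z o) (wmstar o))%:E) ->
  (\int[P]_o (reg_risk gamma alpha c f Sm (sample z o) (wm o)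
              - reg_risk gamma alpha c f Sm (sample z o) (wmstar o))%:E
     <= (stat_acc gamma alpha m)%:E)%E ->
  (* linear convergence of the method on R_n *)
  0 <= rho < 1 ->
  (forall o (u0 : 'rV[R]_p) (s : nat),
     (\int[Q]_x (reg_risk gamma alpha c f Sn (sample z o) (meth o u0 s x)
                 - reg_risk gamma alpha c f Sn (sample z o) (wnstar o))%:E
      <= (rho ^+ s * (reg_risk gamma alpha c f Sn (sample z o) u0
                      - reg_risk gamma alpha c f Sn (sample z o) (wnstar o)))%:E)%E) ->
  (* number of iterations *)
  (0 < s_n)%N ->
  - ln (3 * 2 `^ alpha + (2 `^ alpha - 1) * (2 + c / 2 * sqnorm wstar)) / ln rho
    <= s_n%:R ->
  (\int[P]_o \int[Q]_x
     (reg_risk gamma alpha c f Sn (sample z o) (meth o (wm o) s_n x)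
      - reg_risk gamma alpha c f Sn (sample z o) (wnstar o))%:E
   <= (stat_acc gamma alpha n)%:E)%E.
Proof.
move=> fconv flip fint gam0 /andP[al1 al2] c0 hsup wmin m1 hn hSm hSn sub
  hmstar hnstar mE hE /andP[r0 r1] hmeth s0 hs.
have hSn' : #|Sn| = (2 * m)%N by rewrite hSn hn.
have hT : #|Sn :\: Sm| = m by rewrite cardsDS // hSn' hSm mul2n -addnn addnK.
have hsplit : forall D w, emp_loss f Sn D w =
    (emp_loss f Sm D w + emp_loss f (Sn :\: Sm) D w) / 2.
  by move=> D w; have [] := @emp_split _ _ _ _ _ f Sm Sn D m w m1 hSm hSn' sub.
set a2 := 2 `^ alpha.
have a2ge1 : 1 <= a2.
  have := @ler_powR R 2 ltac:(lra) 0 alpha; rewrite powRr0; apply; lra.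
set Vn := stat_acc gamma alpha n.
set Vm := stat_acc gamma alpha m.
have Vn0 : 0 < Vn.
  by rewrite /Vn /stat_acc divr_gt0 // powR_gt0 // ltr0n hn muln_gt0.
have hVm : Vm = a2 * Vn.
  rewrite /Vm /Vn /stat_acc hn natrM powRM //.
  have h1 : 0 < (m%:R : R) `^ alpha by rewrite powR_gt0 // ltr0n.
  have h2 : 0 < a2 by lra.
  rewrite -/a2; field; rewrite !gt_eqF //.
set t := a2 - 1.
have t0 : 0 <= t by rewrite /t; lra.
set cn := c * Vn / 2.
have cn0 : 0 <= cn by rewrite /cn; apply: mulr_ge0; [apply: mulr_ge0|]; lra.
set sw := sqnorm wstar.
set T := Sn :\: Sm.
pose sm o := sup_dev PZ f Sm (sample z o).
pose sT o := sup_dev PZ f T (sample z o).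
pose sn o := sup_dev PZ f Sn (sample z o).
pose em o := reg_risk gamma alpha c f Sm (sample z o) (wm o)
             - reg_risk gamma alpha c f Sm (sample z o) (wmstar o).
pose Bf o := ((em o)%:E + (sm o + sT o) + (2 * t)%:E * sn o + (t * (cn * sw))%:E)%E.
have hpt : forall o, ((reg_risk gamma alpha c f Sn (sample z o) (wm o)
      - reg_risk gamma alpha c f Sn (sample z o) (wnstar o))%:E <= Bf o)%E.
  move=> o; set D := sample z o.
  have sup_ub : forall S w, (`|exp_loss PZ f w - emp_loss f S D w|%:E
       <= sup_dev PZ f S D)%E.
    by move=> S w; apply: ereal_sup_ubound; exists w.
  set x := wm o; set y := wnstar o; set zz := wmstar o.
  pose L := exp_loss PZ f.
  pose A0 : R := Num.max `|L x - emp_loss f Sm D x| `|L y - emp_loss f Sm D y|.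
  pose B0 : R := Num.max `|L x - emp_loss f T D x| `|L y - emp_loss f T D y|.
  pose C0 : R := Num.max `|L wstar - emp_loss f Sn D wstar| `|L y - emp_loss f Sn D y|.
  have hA : (A0%:E <= sm o)%E by rewrite /A0 EFin_max ge_max !sup_ub.
  have hB : (B0%:E <= sT o)%E by rewrite /B0 EFin_max ge_max !sup_ub.
  have hC : (C0%:E <= sn o)%E by rewrite /C0 EFin_max ge_max !sup_ub.
  apply: le_trans (@lift_bound R (em o) A0 B0 C0 t (cn * sw) _ _ _ t0 hA hB hC).
  rewrite lee_fin.
  have := @key_alg R (emp_loss f Sm D x) (emp_loss f T D x) (L x)
    (emp_loss f Sm D y) (emp_loss f T D y) (L y) (emp_loss f Sn D wstar) (L wstar)
    (emp_loss f Sm D zz) cn t (sqnorm x) (sqnorm y) (sqnorm zz) sw A0 B0 C0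
    t0 cn0 (@sqnorm_ge0 R p x).
  have ecm : c * Vm / 2 = (1 + t) * cn by rewrite hVm /t /cn; ring.
  have h1 : `|L x - emp_loss f Sm D x| <= A0 by rewrite /A0 le_max lexx.
  have h2 : `|L x - emp_loss f T D x| <= B0 by rewrite /B0 le_max lexx.
  have h3 : `|L y - emp_loss f Sm D y| <= A0 by rewrite /A0 le_max lexx orbT.
  have h4 : `|L y - emp_loss f T D y| <= B0 by rewrite /B0 le_max lexx orbT.
  have h5 : `|L wstar - emp_loss f Sn D wstar| <= C0 by rewrite /C0 le_max lexx.
  have h6 : `|L y - (emp_loss f Sm D y + emp_loss f T D y) / 2| <= C0.
    by rewrite -hsplit /C0 le_max lexx orbT.
  have h7 := hmstar o y.
  rewrite /reg_risk hSm -/Vm ecm -/D -/zz in h7.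
  have h8 := hnstar o wstar.
  rewrite /reg_risk hSn -/Vn -/cn -/D -/y -/sw hsplit in h8.
  have h9 := wmin y.
  move=> /(_ h1 h2 h3 h4 h5 h6 h7 h8 h9) K.
  rewrite /em /reg_risk hSn hSm -/Vm -/Vn -/cn ecm !hsplit -/D -/x -/y -/zz.
  have E : t * (2 * C0 + cn * sw) = 2 * t * C0 + t * (cn * sw) by ring.
  lra.
have sd0 : forall (S : {set 'I_N}) (D : 'I_N -> Z), (0 <= sup_dev PZ f S D)%E.
  move=> S D.
  have h : (`|exp_loss PZ f 0 - emp_loss f S D 0|%:E <= sup_dev PZ f S D)%E.
    by apply: ereal_sup_ubound; exists 0.
  by apply: le_trans h; rewrite lee_fin.
have em0 : forall o, 0 <= em o by move=> o; rewrite /em subr_ge0.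
have [msm ism] := hsup Sm ltac:(by rewrite hSm).
have [msT isT] := hsup T ltac:(by rewrite hT).
have [msn isn] := hsup Sn ltac:(by rewrite hSn' muln_gt0).
rewrite hSm -/Vm in ism; rewrite hT -/Vm in isT; rewrite hSn -/Vn in isn.
have Bf0 : forall o, (0 <= Bf o)%E.
  have tcs : 0 <= t * (cn * sw).
    by apply: mulr_ge0 => //; apply: mulr_ge0 => //; exact: sqnorm_ge0.
  have t2 : 0 <= 2 * t by apply: mulr_ge0.
  move=> o; rewrite /Bf; apply: adde_ge0; last by rewrite lee_fin.
  apply: adde_ge0; last by apply: mule_ge0; [rewrite lee_fin|exact: sd0].
  by apply: adde_ge0; [rewrite lee_fin em0|apply: adde_ge0; exact: sd0].
have tcs : 0 <= t * (cn * sw).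
  by apply: mulr_ge0 => //; apply: mulr_ge0 => //; exact: sqnorm_ge0.
have t2 : 0 <= 2 * t by apply: mulr_ge0.
have mST : measurable_fun setT (fun o => sm o + sT o)%E by exact: emeasurable_funD.
have m2 : measurable_fun setT (fun o => (2 * t)%:E * sn o)%E by exact: measurable_funeM.
have m3 : measurable_fun setT (fun o => (em o)%:E + (sm o + sT o))%E
  by exact: emeasurable_funD.
have m4 : measurable_fun setT (fun o => (em o)%:E + (sm o + sT o) + (2 * t)%:E * sn o)%E
  by exact: emeasurable_funD.
have mBf : measurable_fun setT Bf by apply: emeasurable_funD => //; exact: measurable_cst.
have IB : (\int[P]_o Bf o <= Vm%:E + (Vm%:E + Vm%:E) + (2 * t * Vn)%:E + (t * (cn * sw))%:E)%E.
  have em0' : forall o, (0 <= (em o)%:E)%E by move=> o; rewrite lee_fin em0.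
  have sd0m : forall o, (0 <= sm o)%E by move=> o; exact: sd0.
  have sd0T : forall o, (0 <= sT o)%E by move=> o; exact: sd0.
  have sd0n : forall o, (0 <= sn o)%E by move=> o; exact: sd0.
  have sST0 : forall o, (0 <= sm o + sT o)%E by move=> o; exact: adde_ge0.
  have s20 : forall o, (0 <= (2 * t)%:E * sn o)%E.
    by move=> o; apply: mule_ge0; [rewrite lee_fin|exact: sd0].
  have e30 : forall o, (0 <= (em o)%:E + (sm o + sT o))%E by move=> o; exact: adde_ge0.
  have e40 : forall o, (0 <= (em o)%:E + (sm o + sT o) + (2 * t)%:E * sn o)%E.
    by move=> o; exact: adde_ge0.
  have I2 := @intD_le _ _ _ P _ _ _ _ sd0m msm sd0T msT ism isT.
  have I3 := @intD_le _ _ _ P _ _ _ _ em0' mE sST0 mST hE I2.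
  have I4 : (\int[P]_o ((2 * t)%:E * sn o) <= (2 * t * Vn)%:E)%E.
    rewrite ge0_integralZl //; try (by move=> o _; exact: sd0); try (by rewrite lee_fin).
    by rewrite (EFinM (2 * t) Vn); apply: lee_wpmul2l; [rewrite lee_fin|].
  have I5 := @intD_le _ _ _ P _ _ _ _ e30 m3 s20 m2 I3 I4.
  have I6 : (\int[P]_o (t * (cn * sw))%:E <= (t * (cn * sw))%:E)%E.
    rewrite integral_cst // [X in (_ * X)%E]probability_setT.
    by rewrite mule1.
  have c0' : forall o : Omega, (0 <= (t * (cn * sw))%:E)%E by move=> o; rewrite lee_fin.
  exact: (@intD_le _ _ _ P _ _ _ _ e40 m4 c0' (measurable_cst _) I5 I6).
have step1 : (\int[P]_o \int[Q]_x
     (reg_risk gamma alpha c f Sn (sample z o) (meth o (wm o) s_n x)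
      - reg_risk gamma alpha c f Sn (sample z o) (wnstar o))%:E
   <= \int[P]_o ((rho ^+ s_n)%:E * Bf o))%E.
  apply: (@le_int_nm _ _ _ P).
  - move=> o; apply: integral_ge0 => x _; rewrite lee_fin subr_ge0; exact: hnstar.
  - move=> o; apply: le_trans (hmeth o (wm o) s_n) _.
    rewrite (EFinM (rho ^+ s_n)); apply: lee_wpmul2l; last exact: hpt.
    by rewrite lee_fin exprn_ge0.
apply: le_trans step1 _.
have rs0 : (0 <= (rho ^+ s_n)%:E)%E by rewrite lee_fin exprn_ge0.
rewrite ge0_integralZl //; try (by move=> o _; exact: Bf0).
apply: le_trans (lee_wpmul2l rs0 IB) _.
rewrite -!EFinD -EFinM lee_fin.
have K1 : 1 <= 3 * a2 + t * (2 + c / 2 * sw).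
  have : 0 <= t * (2 + c / 2 * sw).
    apply: mulr_ge0 => //; apply: addr_ge0 => //; apply: mulr_ge0; last exact: sqnorm_ge0.
    apply: divr_ge0; lra.
  lra.
have hb := @rho_bound R rho (3 * a2 + t * (2 + c / 2 * sw)) s_n
  ltac:(by rewrite r0 r1) s0 K1 hs.
have E : rho ^+ s_n * (Vm + (Vm + Vm) + 2 * t * Vn + t * (cn * sw)) =
  (rho ^+ s_n * (3 * a2 + t * (2 + c / 2 * sw))) * Vn.
  by rewrite hVm /cn; field.
rewrite E -[leRHS]mul1r ler_wpM2r // ltW //.
Qed.
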